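(* Let $(\widetilde{\mathbf{X}},Y)$ with $\widetilde{\mathbf{X}}\in\mathbb{R}^d$ satisfy $Y=\mu(\widetilde{\mathbf{X}})+\varepsilon$, where $\mu(\widetilde{\mathbf{X}})=\mathbb{E}[Y\mid\widetilde{\mathbf{X}}]$ and $\|\mu\|_\infty\le\mu_{max}<\infty$. Assume that conditionally on $\widetilde{\mathbf{X}}=\widetilde{\mathbf{x}}$, $\varepsilon$ is sub-Gaussian with Orlicz norm in $(0,s_{max}]$ and conditional variance at most $\sigma^2_{max}$, uniformly in $\widetilde{\mathbf{x}}$. Let $(\widetilde{\mathbf{x}}_\ell,y_\ell)_{\ell\le N}$ be i.i.d. copies. Assume there are constants $C_d>C_u>0$ and events $\mathcal{B}_N$ on $\widetilde{\mathbf{X}}^N=(\widetilde{\mathbf{x}}_1,\dots,\widetilde{\mathbf{x}}_N)$ with $\mathbb{P}(\mathcal{B}_N)\to1$, such that on $\mathcal{B}_N$, with $K_0=\lfloor\ln(N)/(2C_d+1)\rfloor$, the Gram eigenvalues satisfy $\sum_{k=K_0}^N\widehat\mu_k\le\sum_{k=K_0}^Ne^{-C_uk}$ and $\widehat\mu_{K_0}\ge e^{-C_dK_0}$. Let $\widehat f^{(m_{stop})}$ be the $L^2$-boosting estimate with $m_{stop}=N^{\frac14\frac{C_u+C_d+1/2}{C_d+1}}$. Then there exist $\delta>0$ and a function $h(N)\in o(N^{1/4-\delta})$ such that $$\mathbb{P}\Big(\big\{\|\widehat f^{(m_{stop})}\|_H>h(N)\big\}\cap\{\widetilde{\mathbf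{X}}^N\in\mathcal{B}_N\}\Big)\to0\qquad(N\to\infty).$$
   Context: $H=H_1\oplus\cdots\oplus H_d$ is the additive RKHS of Gaussian kernels $K_j(x,x')=\exp(-|x-x'|^2/(2\varsigma_j))$, with kernel $K=\sum_jK_j$. Gram matrix: $G_{ij}=K(\widetilde{\mathbf{x}}_i,\widetilde{\mathbf{x}}_j)/N$, with eigenvalues $\widehat\mu_1\ge\dots\ge\widehat\mu_N$; it is assumed invertible. Orlicz norm: $s(\varepsilon)=\inf\{r>0:\mathbb{E}[\exp(\varepsilon^2/r^2)]\le2\}$. Base learner: kernel ridge regression with fixed $\lambda>0$, fitting $\frac1{\sqrt N}\sum_\ell\beta_\ell K(\cdot,\widetilde{\mathbf{x}}_\ell)$ with $\beta=\frac1{\sqrt N}(G+\lambda I)^{-1}u$. $L^2$-boosting: $\widehat f^{(0)}=0$, and each step adds the base learner fit to the residuals. Fitted values after $m$ steps are $(I-(I-S)^m)y^N$ with $S=G(G+\lambda I)^{-1}$. *)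

(* Defs.v *)
From HB Require Import structures.
From mathcomp Require Import all_boot all_order all_algebra.
From mathcomp Require Import all_classical all_reals all_analysis.
Set Implicit Arguments. Unset Strict Implicit. Unset Printing Implicit Defensive.
Import Order.TTheory GRing.Theory Num.Theory.
Import numFieldNormedType.Exports.
Local Open Scope classical_set_scope.
Local Open Scope ring_scope.

Definition addK {R : realType} {d : nat} (vs : 'I_d -> R) (x x' : d.-tuple R) : R :=
  \sum_(j < d) expR (- (tnth x j - tnth x' j) ^+ 2 / (2 * vs j)).

Definition gram {R : realType} {d N : nat} (vs : 'I_d -> R)
    (xs : N.-tuple (d.-tuple R)) : 'M[R]_N :=
  \matrix_(i, j) (addK vs (tnth xs i) (tnth xs j) / N%:R).

(* A function f = sum_l c_l K(., x_l) is represented by its coefficient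
   column vector c.  Kernel matrix (K(x_i,x_j))_{ij} = N * G. *)
Definition kmat {R : realType} {d N : nat} (vs : 'I_d -> R)
    (xs : N.-tuple (d.-tuple R)) : 'M[R]_N :=
  \matrix_(i, j) addK vs (tnth xs i) (tnth xs j).

(* Base learner (kernel ridge regression with parameter lam) fitted to
   responses u: (1/sqrt N) sum_l beta_l K(., x_l), beta = (1/sqrt N)(G+lam I)^-1 u,
   i.e. coefficient vector c = beta / sqrt N. *)
Definition krr_coef {R : realType} {d N : nat} (vs : 'I_d -> R) (lam : R)
    (xs : N.-tuple (d.-tuple R)) (u : 'cV[R]_N) : 'cV[R]_N :=
  let sN := Num.sqrt (N%:R : R) in
  sN^-1 *: (sN^-1 *: (invmx (gram vs xs + lam%:M) *m u)).

Fixpoint boost_coef {R : realType} {d N : nat} (vs : 'I_d -> R) (lam : R)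
    (xs : N.-tuple (d.-tuple R)) (y : 'cV[R]_N) (m : nat) : 'cV[R]_N :=
  match m with
  | 0 => 0
  | m'.+1 =>
      let c := boost_coef vs lam xs y m' in
      c + krr_coef vs lam xs (y - kmat vs xs *m c)
  end.

Definition rkhs_norm {R : realType} {d N : nat} (vs : 'I_d -> R)
    (xs : N.-tuple (d.-tuple R)) (c : 'cV[R]_N) : R :=
  Num.sqrt ((c^T *m kmat vs xs *m c) ord0 ord0).

Definition orlicz_norm {R : realType} (Q : {measure set R -> \bar R}) : \bar R :=
  ereal_inf [set r%:E | r in [set r : R | 0 < r /\
     (\int[Q]_e (expR (e ^+ 2 / r ^+ 2))%:E <= 2%:E)%E]].

Definition mutually_independent {dO dT : measure_display} {R : realType}
    {Omega : measurableType dO} {T : measurableType dT}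
    (P : probability Omega R) (Z : nat -> Omega -> T) : Prop :=
  forall (I : seq nat) (A : nat -> set T),
    uniq I -> (forall i, i \in I -> measurable (A i)) ->
    P (\bigcap_(i in [set` I]) (Z i @^-1` A i)) =
    (\prod_(i <- I) P (Z i @^-1` A i))%E.

Definition sampleX {R : realType} {d : nat} {Omega : Type}
    (X : nat -> Omega -> d.-tuple R) (N : nat) (w : Omega) : N.-tuple (d.-tuple R) :=
  [tuple X (nat_of_ord i) w | i < N].

Definition sampleY {R : realType} {d : nat} {Omega : Type}
    (X : nat -> Omega -> d.-tuple R) (eps : nat -> Omega -> R)
    (mu : d.-tuple R -> R) (N : nat) (w : Omega) : 'cV[R]_N :=
  \col_(i < N) (mu (X i w) + eps i w).

(* Main.v *)
Require Import Defs.
From HB Require Import structures.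
From mathcomp Require Import all_boot all_order all_algebra.
From mathcomp Require Import all_classical all_reals all_analysis.
From mathcomp Require Import measurable_realfun.
From mathcomp Require Import ring lra.
Set Implicit Arguments. Unset Strict Implicit. Unset Printing Implicit Defensive.
Import Order.TTheory GRing.Theory Num.Theory.
Import numFieldNormedType.Exports.
Local Open Scope classical_set_scope.
Local Open Scope ring_scope.
Section G.
Variable R : realType.

Lemma cvg_big (I : Type) (s : seq I) (f : I -> nat -> R) (l : I -> R) :
  (forall i, f i @ \oo --> l i) ->
  (fun n => \sum_(i <- s) f i n) @ \oo --> \sum_(i <- s) l i.
Proof.
move=> H; elim: s => [|a s IH].
  rewrite big_nil; under eq_fun do rewrite big_nil; exact: cvg_cst.
rewrite big_cons; under eq_fun do rewrite big_cons.
exact: cvgD.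
Qed.

Lemma expR_cvg (x : R) : series (exp_coeff x) @ \oo --> expR x.
Proof. exact: (is_cvg_series_exp_coeff x). Qed.

Lemma exp_psd n (w a : 'I_n -> R) (c : R) : 0 <= c ->
  0 <= \sum_i \sum_k w i * w k * expR (c * a i * a k).
Proof.
move=> c0.
pose S m := \sum_i \sum_k w i * w k * series (exp_coeff (c * a i * a k)) m.
have HS : S @ \oo --> \sum_i \sum_k w i * w k * expR (c * a i * a k).
  apply: cvg_big => i; apply: cvg_big => k.
  apply: cvgMr; exact: expR_cvg.
apply: (ler_cvg_to (cvg_cst 0) HS); apply: nearW => m.
rewrite /S.
have -> : \sum_i \sum_k w i * w k * series (exp_coeff (c * a i * a k)) m
   = \sum_(0 <= p < m) (p`!%:R)^-1 * c ^+ p * (\sum_i w i * a i ^+ p) ^+ 2.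
  rewrite /series /=.
  under eq_bigr => i _ do under eq_bigr => k _ do rewrite big_distrr /=.
  under eq_bigr => i _ do rewrite exchange_big /=.
  rewrite exchange_big /=; apply: eq_bigr => p _.
  rewrite expr2 big_distrl mulr_sumr; apply: eq_bigr => i _.
  rewrite /= mulr_sumr mulr_sumr; apply: eq_bigr => k _.
  rewrite exp_coeffE /= !exprMn; ring.
apply: sumr_ge0 => p _; apply: mulr_ge0; last exact: sqr_ge0.
by apply: mulr_ge0; [rewrite invr_ge0 | exact: exprn_ge0].
Qed.

Lemma gauss_psd n (w a : 'I_n -> R) (s : R) : 0 < s ->
  0 <= \sum_i \sum_k w i * w k * expR (- (a i - a k) ^+ 2 / (2 * s)).
Proof.
move=> s0.
have := @exp_psd n (fun i => w i * expR (- a i ^+ 2 / (2 * s))) a s^-1.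
rewrite invr_ge0 ltW// => /(_ isT) H; apply: (le_trans H) => {H}.
rewrite le_eqVlt; apply/orP; left; apply/eqP.
apply: eq_bigr => i _; apply: eq_bigr => k _.
have -> : - (a i - a k) ^+ 2 / (2 * s) =
  (- a i ^+ 2 / (2 * s)) + (- a k ^+ 2 / (2 * s)) + s^-1 * a i * a k.
  by field; rewrite gt_eqF.
rewrite !expRD; ring.
Qed.
End G.
Section LA.
Variable R : realType.
Variable N : nat.
Implicit Types u v w : 'cV[R]_N.

Definition dotv u v := (u^T *m v) 0 0.

Lemma dotvE u v : dotv u v = \sum_i u i 0 * v i 0.
Proof. by rewrite /dotv mxE; apply: eq_bigr => i _; rewrite mxE. Qed.

Lemma dotvDl u v w : dotv (u + v) w = dotv u w + dotv v w.
Proof. by rewrite !dotvE -big_split; apply: eq_bigr => i _; rewrite mxE mulrDl. Qed.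
Lemma dotvDr u v w : dotv w (u + v) = dotv w u + dotv w v.
Proof. by rewrite !dotvE -big_split; apply: eq_bigr => i _; rewrite mxE mulrDr. Qed.
Lemma dotvZl a u w : dotv (a *: u) w = a * dotv u w.
Proof. by rewrite !dotvE mulr_sumr; apply: eq_bigr => i _; rewrite mxE mulrA. Qed.
Lemma dotvZr a u w : dotv w (a *: u) = a * dotv w u.
Proof. by rewrite !dotvE mulr_sumr; apply: eq_bigr => i _; rewrite mxE mulrCA. Qed.
Lemma dotvNl u w : dotv (- u) w = - dotv u w.
Proof. by rewrite -scaleN1r dotvZl mulN1r. Qed.
Lemma dotvNr u w : dotv w (- u) = - dotv w u.
Proof. by rewrite -scaleN1r dotvZr mulN1r. Qed.
Lemma dotvC u v : dotv u v = dotv v u.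
Proof. by rewrite !dotvE; apply: eq_bigr => i _; rewrite mulrC. Qed.
Lemma dotv_ge0 u : 0 <= dotv u u.
Proof. by rewrite dotvE; apply: sumr_ge0 => i _; rewrite -expr2 sqr_ge0. Qed.
Lemma dotv_mul (K : 'M[R]_N) u v : dotv u (K *m v) = dotv (K^T *m u) v.
Proof.
rewrite !dotvE.
under eq_bigr => i _ do rewrite mxE big_distrr /=.
rewrite exchange_big /=; apply: eq_bigr => k _.
rewrite !mxE big_distrl /=; apply: eq_bigr => i _; rewrite !mxE; ring.
Qed.
Lemma dotv_gt0 u : u != 0 -> 0 < dotv u u.
Proof.
move=> u0; rewrite lt_neqAle dotv_ge0 andbT eq_sym; apply: contra u0.
rewrite dotvE psumr_eq0; last by move=> i _; rewrite -expr2 sqr_ge0.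
move=> /allP H; apply/eqP/matrixP => i j; rewrite (ord1 j) mxE.
have := H i (mem_index_enum _); rewrite -expr2 sqrf_eq0 => /eqP //.
Qed.

Lemma qfE (K : 'M[R]_N) u : (u^T *m K *m u) 0 0 = dotv u (K *m u).
Proof. by rewrite /dotv mulmxA. Qed.

Variable K : 'M[R]_N.
Hypothesis Ksym : K^T = K.
Hypothesis Kpsd : forall u, 0 <= dotv u (K *m u).
Variable lam : R.
Hypothesis lam0 : 0 < lam.
Hypothesis N0 : (0 < N)%N.

Let G := (N%:R)^-1 *: K.
Let A := G + lam%:M.

Lemma A_unit : A \in unitmx.
Proof.
rewrite -row_free_unit -kermx_eq0; apply/negPn/negP => Hk.
have [i Hi] : exists i, row i (kermx A) != 0.
  apply/existsP; apply: contraR Hk; rewrite negb_exists => /forallP H.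
  apply/eqP/row_matrixP => i; rewrite row0; exact/eqP/negPn/H.
set u := row i (kermx A) in Hi.
have uA : u *m A = 0 by rewrite /u -row_mul mulmx_ker row0.
pose c := u^T.
have c0 : c != 0 by rewrite /c; apply: contra Hi => /eqP H; rewrite -(trmxK u) H; apply/eqP/matrixP => a b; rewrite !mxE.
have : dotv c (A *m c) = 0.
  by rewrite /dotv /c trmxK mulmxA uA mul0mx mxE.
rewrite /A mulmxDl dotvDr mul_scalar_mx dotvZr /G -scalemxAl dotvZr.
have := Kpsd c; have := dotv_gt0 c0; have : 0 < (N%:R : R)^-1 by rewrite invr_gt0 ltr0n.
move=> h1 h2 h3 h4.
have : 0 < N%:R^-1 * dotv c (K *m c) + lam * dotv c c.
  by apply: ltr_pwDr; [exact: mulr_gt0 | exact: mulr_ge0 (ltW _) _].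
by rewrite h4 ltxx.
Qed.


Lemma step c y (sN := Num.sqrt (N%:R : R))
  (c' := c + sN^-1 *: (sN^-1 *: (invmx A *m (y - K *m c)))) :
  dotv c' (K *m c') <= dotv c (K *m c) + dotv y y / (lam * N%:R).
Proof.
have n0 : 0 < (N%:R : R) by rewrite ltr0n.
set n := (N%:R : R) in n0 sN c' *.
have hs : sN^-1 *: (sN^-1 *: (invmx A *m (y - K *m c))) = n^-1 *: (invmx A *m (y - K *m c)).
  rewrite scalerA -invfM -expr2 /sN sqr_sqrtr //; exact: ltW.
rewrite /c' hs {hs c' sN}.
set r := y - K *m c.
set z := invmx A *m r.
have Az : A *m z = r by rewrite /z mulKVmx // A_unit.
have Kc : K *m c = y - r by rewrite /r opprB addrC subrK.
set q := dotv z (K *m z).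
have q0 : 0 <= q := Kpsd z.
have zr : dotv z r = n^-1 * q + lam * dotv z z.
  by rewrite -Az /A mulmxDl dotvDr mul_scalar_mx dotvZr /G -scalemxAl dotvZr.
have e1 : dotv c (K *m z) = dotv z (K *m c).
  by rewrite dotv_mul Ksym dotvC.
have e2 : dotv z (K *m c) = dotv z y - (n^-1 * q + lam * dotv z z).
  by rewrite Kc dotvDr dotvNr zr.
have sq := dotv_ge0 (y - lam *: z).
rewrite !(dotvDl, dotvDr, dotvNl, dotvNr, dotvZl, dotvZr) in sq.
rewrite (dotvC y z) in sq.
rewrite mulmxDr -scalemxAr !(dotvDl, dotvDr, dotvZl, dotvZr) e1 e2 -/q.
set zy := dotv z y in e2 sq *; set zz := dotv z z in zr e2 sq *; set yy := dotv y y in sq *.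
set P0 := dotv c (K *m c).
have ni0 : 0 < n^-1 by rewrite invr_gt0.
have li0 : 0 < lam^-1 by rewrite invr_gt0.
have nn : n * n^-1 = 1 by rewrite mulfV // gt_eqF.
have ll : lam * lam^-1 = 1 by rewrite mulfV // gt_eqF.
have H1 := mulr_ge0 (ltW li0) sq.
have -> : yy / (lam * n) = n^-1 * (lam^-1 * yy) by rewrite invfM; ring.
have H2 : 2 * zy - n^-1 * q - 2 * lam * zz <= lam^-1 * yy.
  have : lam^-1 * (yy - lam * zy + (- (lam * zy) - lam * - (lam * zz))) = lam^-1 * yy - 2 * zy + lam * zz.
    have -> : lam^-1 * (yy - lam * zy + (- (lam * zy) - lam * - (lam * zz))) = lam^-1 * yy - (lam * lam^-1) * 2 * zy + (lam * lam^-1) * lam * zz by ring.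
    by rewrite ll; ring.
  move=> E; rewrite E in H1.
  have : 0 <= n^-1 * q by apply: mulr_ge0 => //; exact: ltW.
  have : 0 <= lam * zz by apply: mulr_ge0; [exact: ltW | exact: dotv_ge0].
  lra.
have : n^-1 * (2 * zy - n^-1 * q - 2 * lam * zz) <= n^-1 * (lam^-1 * yy).
  by rewrite ler_pM2l.
have -> : P0 + n^-1 * (zy - (n^-1 * q + lam * zz)) +
 (n^-1 * (zy - (n^-1 * q + lam * zz)) + n^-1 * (n^-1 * q)) = P0 + n^-1 * (2 * zy - n^-1 * q - 2 * lam * zz) by ring.
lra.
Qed.

End LA.
Section Boost.
Variable R : realType.
Variables (d : nat) (vs : 'I_d -> R) (lam : R).
Hypothesis vs0 : forall j, 0 < vs j.
Hypothesis lam0 : 0 < lam.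

Lemma kmat_sym N (xs : N.-tuple (d.-tuple R)) : (kmat vs xs)^T = kmat vs xs.
Proof.
apply/matrixP => i k; rewrite !mxE /addK; apply: eq_bigr => j _.
by rewrite -sqrrN opprB.
Qed.

Lemma kmat_psd N (xs : N.-tuple (d.-tuple R)) (u : 'cV[R]_N) :
  0 <= dotv u (kmat vs xs *m u).
Proof.
rewrite dotvE.
have -> : \sum_i u i 0 * (kmat vs xs *m u) i 0 =
  \sum_j \sum_i \sum_k u i 0 * u k 0 *
     expR (- (tnth (tnth xs i) j - tnth (tnth xs k) j) ^+ 2 / (2 * vs j)).
  rewrite exchange_big /=; apply: eq_bigr => i _.
  rewrite mxE big_distrr /= exchange_big /=; apply: eq_bigr => k _.
  rewrite !mxE /addK big_distrl big_distrr /=; apply: eq_bigr => j _; ring.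
apply: sumr_ge0 => j _; apply: gauss_psd; exact: vs0.
Qed.

Lemma gramE N (xs : N.-tuple (d.-tuple R)) : gram vs xs = (N%:R)^-1 *: kmat vs xs.
Proof. by apply/matrixP => i k; rewrite !mxE mulrC. Qed.

Lemma boost_bound N (xs : N.-tuple (d.-tuple R)) (y : 'cV[R]_N) m : (0 < N)%N ->
  dotv (boost_coef vs lam xs y m) (kmat vs xs *m boost_coef vs lam xs y m)
  <= m%:R * (dotv y y / (lam * N%:R)).
Proof.
move=> N0; elim: m => [|m IH].
  by rewrite /= mulmx0 /dotv mulmx0 mxE mul0r.
rewrite /= /krr_coef gramE.
apply: le_trans; first exact: (step (kmat_sym xs) (kmat_psd xs) lam0 N0).
by rewrite -nat1r mulrDl mul1r addrC lerD2l.
Qed.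
End Boost.
Lemma measurable_inv (R : realType) : measurable_fun [set: R] (fun x : R => x^-1).
Proof.
have -> : [set: R] = ~` [set 0] `|` [set 0] by rewrite setvU.
have c0 : closed [set (0:R)].
  apply: compact_closed; [exact: Rhausdorff | exact: compact_set1].
apply/measurable_funU; [|exact: measurable_set1|split].
- by apply: measurableC; exact: measurable_set1.
- apply: measurable_realfun.open_continuous_measurable_fun; first by rewrite openC.
  move=> x; rewrite inE /= => /eqP x0; exact: inv_continuous.
- exact: measurable_fun_set1.
Qed.

Lemma measurable_sqrt (R : realType) : measurable_fun [set: R] (@Num.sqrt R).
Proof. apply: measurable_realfun.continuous_measurable_fun; exact: sqrt_continuous. Qed.

Section Meas.
Context d0 (T : measurableType d0) (R : realType).
Definition mf (f : T -> R) := measurable_fun setT f.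
Definition mmx m n (F : T -> 'M[R]_(m,n)) := forall i j, mf (fun w => F w i j).

Lemma mf_cst a : mf (fun _ => a). Proof. exact: measurable_cst. Qed.
Lemma mf_add f g : mf f -> mf g -> mf (fun w => f w + g w).
Proof. exact: measurable_funD. Qed.
Lemma mf_mul f g : mf f -> mf g -> mf (fun w => f w * g w).
Proof. exact: measurable_funM. Qed.
Lemma mf_opp f : mf f -> mf (fun w => - f w).
Proof. exact: measurable_funN. Qed.
Lemma mf_comp (h : R -> R) f : measurable_fun setT h -> mf f -> mf (fun w => h (f w)).
Proof. move=> mh mF; exact: (measurableT_comp mh mF). Qed.
Lemma mf_sum (I : Type) (s : seq I) (f : I -> T -> R) :
  (forall i, mf (f i)) -> mf (fun w => \sum_(i <- s) f i w).
Proof. exact: measurable_sum. Qed.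
Lemma mf_prod (I : eqType) (s : seq I) (f : I -> T -> R) :
  (forall i, mf (f i)) -> mf (fun w => \prod_(i <- s) f i w).
Proof. by move=> H; apply: measurable_prod => i _; exact: H. Qed.

Lemma mmx_add m n (F G : T -> 'M[R]_(m,n)) : mmx F -> mmx G -> mmx (fun w => F w + G w).
Proof. move=> HF HG i j; under eq_fun do rewrite mxE; exact: mf_add. Qed.
Lemma mmx_opp m n (F : T -> 'M[R]_(m,n)) : mmx F -> mmx (fun w => - F w).
Proof. move=> HF i j; under eq_fun do rewrite mxE; exact: mf_opp. Qed.
Lemma mmx_scale m n (a : T -> R) (F : T -> 'M[R]_(m,n)) : mf a -> mmx F -> mmx (fun w => a w *: F w).
Proof. move=> Ha HF i j; under eq_fun do rewrite mxE; exact: mf_mul. Qed.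
Lemma mmx_mul m n p (F : T -> 'M[R]_(m,n)) (G : T -> 'M[R]_(n,p)) : mmx F -> mmx G -> mmx (fun w => F w *m G w).
Proof.
move=> HF HG i j; under eq_fun do rewrite mxE.
by apply: mf_sum => k; apply: mf_mul.
Qed.
Lemma mmx_tr m n (F : T -> 'M[R]_(m,n)) : mmx F -> mmx (fun w => (F w)^T).
Proof. move=> HF i j; under eq_fun do rewrite mxE; exact: HF. Qed.
Lemma mmx_cst m n (A : 'M[R]_(m,n)) : mmx (fun _ => A).
Proof. move=> i j; exact: mf_cst. Qed.

Lemma mf_det n (F : T -> 'M[R]_n) : mmx F -> mf (fun w => \det (F w)).
Proof.
move=> HF; rewrite /determinant.
apply: mf_sum => s; apply: mf_mul; first exact: mf_cst.
by apply: mf_prod => i; exact: HF.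
Qed.

Lemma mmx_adj n (F : T -> 'M[R]_n) : mmx F -> mmx (fun w => \adj (F w)).
Proof.
move=> HF i j; under eq_fun do rewrite mxE /cofactor.
apply: mf_mul; first exact: mf_cst.
apply: mf_det => a b; under eq_fun do rewrite !mxE; exact: HF.
Qed.

Lemma mmx_inv n (F : T -> 'M[R]_n) : mmx F -> (forall w, F w \in unitmx) ->
  mmx (fun w => invmx (F w)).
Proof.
move=> HF HU; have -> : (fun w => invmx (F w)) = (fun w => (\det (F w))^-1 *: \adj (F w)).
  by apply: funext => w; rewrite /invmx HU.
apply: mmx_scale; last exact: mmx_adj.
apply: mf_comp; [exact: measurable_inv | exact: mf_det].
Qed.
End Meas.
Section Pipe.
Context dO (Omega : measurableType dO) (R : realType) (d : nat) (vs : 'I_d -> R) (lam : R)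
  (mu : d.-tuple R -> R) (X : nat -> Omega -> d.-tuple R) (eps : nat -> Omega -> R).
Hypothesis vs0 : forall j, 0 < vs j.
Hypothesis lam0 : 0 < lam.
Hypothesis mmu : measurable_fun setT mu.
Hypothesis mX : forall l, measurable_fun setT (X l).
Hypothesis meps : forall l, measurable_fun setT (eps l).

Lemma mf_tnth l j : mf (fun w => tnth (X l w) j).
Proof. exact: (measurableT_comp (measurable_tnth j) (mX l)). Qed.

Lemma mmx_kmat N : mmx (fun w => kmat vs (sampleX X N w)).
Proof.
move=> i k; under eq_fun do rewrite mxE /sampleX !tnth_mktuple /addK.
apply: mf_sum => j; apply: mf_comp; first exact: measurable_expR.
apply: mf_mul; last exact: mf_cst.
apply: mf_opp; apply: measurable_funX.
by apply: mf_add; [exact: mf_tnth | apply: mf_opp; exact: mf_tnth].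
Qed.

Lemma mmx_sampleY N : mmx (sampleY X eps mu N).
Proof.
move=> i k; under eq_fun do rewrite mxE.
apply: mf_add; last exact: meps.
exact: (measurableT_comp mmu (mX i)).
Qed.

Lemma gram_unit N (xs : N.-tuple (d.-tuple R)) : (0 < N)%N -> gram vs xs + lam%:M \in unitmx.
Proof.
move=> N0; rewrite gramE.
exact: (A_unit (kmat_psd vs0 xs) lam0 N0).
Qed.

Lemma mmx_boost N m : (0 < N)%N ->
  mmx (fun w => boost_coef vs lam (sampleX X N w) (sampleY X eps mu N w) m).
Proof.
move=> N0; elim: m => [|m IH] /=; first exact: mmx_cst.
apply: mmx_add => //; rewrite /krr_coef.
apply: mmx_scale; first exact: mf_cst.
apply: mmx_scale; first exact: mf_cst.
apply: mmx_mul.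
  apply: mmx_inv; last by move=> w; exact: gram_unit.
  apply: mmx_add; last exact: mmx_cst.
  under eq_fun do rewrite gramE.
  apply: mmx_scale; [exact: mf_cst | exact: mmx_kmat].
apply: mmx_add; first exact: mmx_sampleY.
by apply: mmx_opp; apply: mmx_mul => //; exact: mmx_kmat.
Qed.

Lemma mf_norm N m : (0 < N)%N ->
  mf (fun w => rkhs_norm vs (sampleX X N w)
        (boost_coef vs lam (sampleX X N w) (sampleY X eps mu N w) m)).
Proof.
move=> N0; rewrite /rkhs_norm; apply: mf_comp; first exact: measurable_sqrt.
apply: mmx_mul; last exact: mmx_boost.
apply: mmx_mul; last exact: mmx_kmat.
by apply: mmx_tr; exact: mmx_boost.
Qed.
End Pipe.
Section Tail.
Context (R : realType) (d : nat) (kappa : R.-pker (d.-tuple R) ~> R) (s_max : R).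
Hypothesis horl : forall x, (0 < orlicz_norm (kappa x))%E /\ (orlicz_norm (kappa x) <= s_max%:E)%E.

Lemma smax_gt0 : 0 < s_max.
Proof.
have [h1 h2] := horl [tuple of nseq d 0].
by rewrite -lte_fin; exact: lt_le_trans h1 h2.
Qed.

Definition tailset (t : R) := [set e : R | t < `|e|].
Lemma measurable_tailset (t : R) : measurable (tailset t).
Proof.
have := @normr_measurable R setT measurableT _ (measurable_itv `]t, +oo[).
rewrite setTI; congr measurable; apply/seteqP; split => e /=; by rewrite in_itv /= andbT.
Qed.

Lemma kappa_tail x (t : R) : 0 <= t ->
  (kappa x (tailset t) <= (2 * expR (- (t ^+ 2 / (s_max + 1) ^+ 2)))%:E)%E.
Proof.
move=> t0; have s0 := smax_gt0.
set r := s_max + 1.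
have r0 : 0 < r by rewrite /r; lra.
have [_ h2] := horl x.
have : (orlicz_norm (kappa x) < r%:E)%E.
  by apply: le_lt_trans h2 _; rewrite lte_fin /r; lra.
move=> /ereal_inf_lt [_ [r' [r'0 Hint] <-]]; rewrite lte_fin => r'r.
set E := tailset t.
have mE : measurable E := measurable_tailset t.
set c := expR (t ^+ 2 / r' ^+ 2).
have c0 : 0 < c := expR_gt0 _.
have mf : measurable_fun [set: R] (fun e : R => (expR (e ^+ 2 / r' ^+ 2))%:E).
  apply/measurable_EFinP; apply: measurableT_comp; first exact: measurable_expR.
  apply: measurable_funM; last exact: measurable_cst.
  exact: measurable_funX.
have mk : (c%:E * kappa x E <= 2%:E)%E.
  rewrite -integral_cst //.
  apply: le_trans Hint.
  apply: (@le_trans _ _ (\int[kappa x]_(e in E) (expR (e ^+ 2 / r' ^+ 2))%:E)%E).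
    apply: ge0_le_integral => //.
    - by move=> e _; rewrite /= lee_fin ltW.
    - exact: measurable_funS mf.
    move=> e /= He; rewrite lee_fin /c ler_expR ler_pM2r ?invr_gt0 ?exprn_gt0 //.
    rewrite -[e ^+ 2](real_normK (num_real e)).
    have h := ltW He; have h' := normr_ge0 e; rewrite /E /tailset /= in h; nra.
  apply: ge0_subset_integral => //.
have : (kappa x E <= (c^-1)%:E * 2%:E)%E by rewrite lee_pdivlMl.
move=> H; apply: le_trans H _.
rewrite -EFinM lee_fin mulrC ler_pM2l // /c -expRN ler_expR lerN2.
apply: ler_wpM2l; first exact: sqr_ge0.
rewrite lef_pV2 ?posrE ?exprn_gt0 //.
have : 0 <= r' * r' by nra.
rewrite !expr2; nra.
Qed.

Context dO (Omega : measurableType dO) (P : probability Omega R) (PX : probability (d.-tuple R) R)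
  (X : nat -> Omega -> d.-tuple R) (eps : nat -> Omega -> R).
Hypothesis meps : forall l, measurable_fun setT (eps l).
Hypothesis hjoint : forall l (A : set (d.-tuple R)) (E : set R), measurable A -> measurable E ->
     P (X l @^-1` A `&` eps l @^-1` E) = (\int[PX]_(x in A) kappa x E)%E.

Lemma meas_epstail l t : measurable (eps l @^-1` tailset t).
Proof. by have := meps l measurableT (measurable_tailset t); rewrite setTI. Qed.

Lemma P_tail l t : 0 <= t ->
  (P (eps l @^-1` tailset t) <= (2 * expR (- (t ^+ 2 / (s_max + 1) ^+ 2)))%:E)%E.
Proof.
move=> t0; rewrite -[eps l @^-1` _]setTI -(preimage_setT (X l)) hjoint //; last exact: measurable_tailset.
set b := 2 * expR _.
apply: (@le_trans _ _ (\int[PX]_(x in setT) (cst b%:E) x)%E).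
  apply: ge0_le_integral => //.
  - exact: measurable_kernel (measurable_tailset t).
  - by move=> x _; exact: kappa_tail.
rewrite integral_cst //; set u := (X in (_ * X)%E); have -> : u = 1%E by rewrite /u; exact: probability_setT.
by rewrite mule1.
Qed.

Lemma P_union N t (A : set Omega) : 0 <= t -> measurable A ->
  A `<=` \big[setU/set0]_(i < N) (eps i @^-1` tailset t) ->
  (P A <= (N%:R * (2 * expR (- (t ^+ 2 / (s_max + 1) ^+ 2))))%:E)%E.
Proof.
move=> t0 mA sA.
apply: le_trans; first apply: (@content_subadditive _ _ _ P A (fun k => eps k @^-1` tailset t) N) => //.
  by move=> k _; exact: meas_epstail.
apply: le_trans; first by apply: lee_sum => i _; exact: P_tail.
by rewrite sumEFin lee_fin sumr_const card_ord [in X in _ <= X]mulrC mulr_natr.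
Qed.
End Tail.
Section RealLim.
Variable R : realType.

Lemma powR_cvgy (k : R) : 0 < k -> (fun N : nat => (N%:R : R) `^ k) @ \oo --> +oo.
Proof.
move=> k0; apply/cvgryPge => A.
exists (Num.truncn (`|A| `^ k^-1)).+1 => // N /= HN.
have H1 : `|A| `^ k^-1 <= N%:R.
  have := truncn_itv (powR_ge0 `|A| k^-1) => /andP[_ h].
  apply: (le_trans (ltW h)); by rewrite ler_nat.
apply: (le_trans (ler_norm A)).
have -> : `|A| = (`|A| `^ k^-1) `^ k by rewrite -powRrM mulVf ?gt_eqF // powRr1.
apply: ge0_ler_powR => //; [exact: ltW | by rewrite nnegrE powR_ge0 | by rewrite nnegrE ler0n].
Qed.

Lemma powRV_cvg0 (k : R) : 0 < k -> (fun N : nat => ((N%:R : R) `^ k)^-1) @ \oo --> 0.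
Proof.
move=> k0; apply/(@gtr0_cvgV0 _ _ _ _ (fun N : nat => (N%:R : R) `^ k)); last exact: powR_cvgy.
by exists 1%N => // N /= HN; rewrite powR_gt0 // ltr0n.
Qed.

Lemma h_lim (lam mu_max r a : R) : 0 < lam -> 0 <= mu_max -> 0 < r -> 0 <= a -> a < 2^-1 ->
  (fun N : nat => Num.sqrt ((Num.truncn ((N%:R : R) `^ a))%:R / lam) *
     (mu_max + r * Num.sqrt (2 * ln (N%:R : R))) /
     (N%:R : R) `^ (4^-1 - (4^-1 - a / 2) / 2)) @ \oo --> 0.
Proof.
move=> lam0 mu0 r0 a0 a1.
set dl := (4^-1 - a / 2) / 2.
have dl0 : 0 < dl by rewrite /dl; lra.
set c2 := Num.sqrt (2 / dl).
set sl := Num.sqrt lam.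
have sl0 : 0 < sl by rewrite sqrtr_gt0.
pose U (N : nat) := sl^-1 * (mu_max * ((N%:R : R) `^ dl)^-1 + r * c2 * ((N%:R : R) `^ (dl / 2))^-1).
have HU : U @ \oo --> 0.
  have H : U @ \oo --> sl^-1 * (mu_max * 0 + r * c2 * 0).
    apply: cvgMr; apply: cvgD; apply: cvgMr; apply: powRV_cvg0 => //.
    by rewrite divr_gt0.
  by rewrite !mulr0 addr0 mulr0 in H.
apply: (@squeeze_cvgr _ _ _ _ (fun=> 0) U) => //; last exact: cvg_cst.
exists 1%N => // N /= HN.
set n := (N%:R : R).
have n1 : 1 <= n by rewrite /n ler1n.
have n0 : 0 < n by lra.
have nn0 : (n != 0) by rewrite gt_eqF.
set m := Num.truncn (n `^ a).
set S := Num.sqrt (m%:R / lam).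
set L := Num.sqrt (2 * ln n).
set P1 := n `^ (a / 2).
set Pd := n `^ (dl / 2).
have P10 : 0 < P1 by rewrite powR_gt0.
have Pd0 : 0 < Pd by rewrite powR_gt0.
have E1 : n `^ (4^-1 - dl) = P1 * (Pd * Pd).
  rewrite /P1 /Pd -!powRD ?nn0 ?implybT //; apply: congr1; rewrite /dl; lra.
have E2 : n `^ dl = Pd * Pd.
  rewrite /Pd -!powRD ?nn0 ?implybT //; apply: congr1; lra.
rewrite E1 /U -/n E2 -/Pd.
have S0 : 0 <= S := sqrtr_ge0 _.
have L0 : 0 <= L := sqrtr_ge0 _.
have HS : S <= P1 / sl.
  have -> : P1 = Num.sqrt (n `^ a) by rewrite /P1 -powR12_sqrt ?powR_ge0 // -powRrM.
  rewrite /S /sl -sqrtrV; last exact: ltW.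
  rewrite -sqrtrM ?powR_ge0 // ler_sqrt; last by rewrite mulr_ge0 ?powR_ge0 // invr_ge0 ltW.
  rewrite ler_pM2r ?invr_gt0 //.
  by have := truncn_itv (powR_ge0 n a) => /andP[].
have HL : L <= c2 * Pd.
  have lnb : ln n <= n `^ dl / dl.
    rewrite ler_pdivlMr //; have := ln_sublinear (powR_gt0 dl n0).
    by rewrite ln_powR mulrC => /ltW.
  have -> : Pd = Num.sqrt (n `^ dl) by rewrite /Pd -powR12_sqrt ?powR_ge0 // -powRrM.
  rewrite /L /c2 -sqrtrM; last by rewrite divr_ge0 // ltW.
  rewrite ler_sqrt; last by rewrite mulr_ge0 ?powR_ge0 // divr_ge0 // ltW.
  rewrite (_ : 2 / dl * n `^ dl = 2 * (n `^ dl / dl)); last by ring.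
  by rewrite ler_pM2l.
apply/andP; split.
  apply: divr_ge0; last by apply: mulr_ge0; [exact: ltW | apply: mulr_ge0; exact: ltW].
  apply: mulr_ge0 => //; apply: addr_ge0 => //; apply: mulr_ge0 => //; exact: ltW.
have H1 : S * (mu_max + r * L) <= P1 / sl * (mu_max + r * (c2 * Pd)).
  apply: ler_pM => //; first by apply: addr_ge0 => //; apply: mulr_ge0 => //; exact: ltW.
  by rewrite lerD2l ler_pM2l.
rewrite ler_pdivrMr; last by apply: mulr_gt0 => //; exact: mulr_gt0.
apply: (le_trans H1); rewrite le_eqVlt; apply/orP; left; apply/eqP.
by field; rewrite !gt_eqF.
Qed.
End RealLim.

Section NB.
Variable R : realType.
Variables (d : nat) (vs : 'I_d -> R) (lam : R).
Hypothesis vs0 : forall j, 0 < vs j.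
Hypothesis lam0 : 0 < lam.

Lemma norm_bound N (xs : N.-tuple (d.-tuple R)) (y : 'cV[R]_N) m (B0 : R) :
  (0 < N)%N -> 0 <= B0 -> (forall i, `|y i 0| <= B0) ->
  rkhs_norm vs xs (boost_coef vs lam xs y m) <= Num.sqrt (m%:R / lam) * B0.
Proof.
move=> N0 B00 hy.
have n0 : 0 < (N%:R : R) by rewrite ltr0n.
rewrite /rkhs_norm qfE.
have yy : dotv y y <= N%:R * B0 ^+ 2.
  rewrite dotvE; apply: le_trans (_ : \sum_(i < N) B0 ^+ 2 <= _).
    apply: ler_sum => i _; rewrite -expr2 -[y i 0 ^+ 2](real_normK (num_real _)).
    have := hy i; have := normr_ge0 (y i 0); nra.
  by rewrite sumr_const card_ord mulr_natl.
have ml : 0 <= m%:R / lam by apply: divr_ge0 => //; exact: ltW.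
have B2 : 0 <= m%:R / lam * B0 ^+ 2 by apply: mulr_ge0 => //; exact: sqr_ge0.
apply: (@le_trans _ _ (Num.sqrt (m%:R / lam * B0 ^+ 2))).
  rewrite ler_sqrt //; apply: (le_trans (boost_bound vs0 lam0 xs y m N0)).
  have -> : m%:R * (dotv y y / (lam * N%:R)) = m%:R / lam * (dotv y y / N%:R).
    by rewrite invfM; ring.
  by apply: ler_wpM2l => //; rewrite ler_pdivrMr // mulrC.
by rewrite sqrtrM // sqrtr_sqr ger0_norm.
Qed.
End NB.

Unset Implicit Arguments.

Theorem lemma5
  (R : realType) (dO : measure_display) (Omega : measurableType dO)
  (P : probability Omega R)
  (d : nat) (vs : 'I_d -> R) (lam : R)
  (mu : d.-tuple R -> R) (mu_max s_max sigma2_max : R)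
  (PX : probability (d.-tuple R) R) (kappa : R.-pker (d.-tuple R) ~> R)
  (X : nat -> Omega -> d.-tuple R) (eps : nat -> Omega -> R)
  (Cu Cd : R) (B : forall N : nat, set (N.-tuple (d.-tuple R))) :
  (forall j, 0 < vs j) -> 0 < lam ->
  (* regression function: bounded, measurable *)
  measurable_fun setT mu -> (forall x, `|mu x| <= mu_max) ->
  (* sample: (X_l, eps_l) measurable, i.i.d., with law
     P(X_l in A, eps_l in E) = int_A kappa x E dPX(x);  Y_l = mu(X_l) + eps_l *)
  (forall l, measurable_fun setT (X l)) -> (forall l, measurable_fun setT (eps l)) ->
  (forall l (A : set (d.-tuple R)) (E : set R), measurable A -> measurable E ->
     P (X l @^-1` A `&` eps l @^-1` E) = (\int[PX]_(x in A) kappa x E)%E) ->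
  mutually_independent P (fun l w => (X l w, eps l w)) ->
  (* conditional on X = x: E[eps | X = x] = 0 (i.e. mu = E[Y|X]),
     Var(eps | X = x) <= sigma2_max, Orlicz norm in (0, s_max] *)
  (forall x, (kappa x).-integrable setT (fun e => e%:E) /\
             (\int[kappa x]_e e%:E = 0)%E) ->
  (forall x, (\int[kappa x]_e (e ^+ 2)%:E <= sigma2_max%:E)%E) ->
  (forall x, (0 < orlicz_norm (kappa x))%E /\ (orlicz_norm (kappa x) <= s_max%:E)%E) ->
  (* Gram matrix invertible (almost surely) *)
  (forall N : nat, {ae P, forall w, gram vs (sampleX X N w) \in unitmx}) ->
  (* events B_N on X^N *)
  0 < Cu -> Cu < Cd ->
  (forall N, measurable (B N)) ->
  (fun N => P [set w | B N (sampleX X N w)]) @ \oo --> 1%E ->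
  (forall (N : nat) (xs : N.-tuple (d.-tuple R)), B N xs ->
     let K0 := Num.truncn (ln (N%:R : R) / (2 * Cd + 1)) in
     (1 <= K0)%N ->
     forall ev : 'I_N -> R,
       (forall i j : 'I_N, (i <= j)%N -> ev j <= ev i) ->
       char_poly (gram vs xs) = \prod_(i < N) ('X - (ev i)%:P) ->
       (\sum_(i < N | (K0 <= i.+1)%N) ev i
          <= \sum_(i < N | (K0 <= i.+1)%N) expR (- Cu * (i.+1)%:R))
       /\ (forall i : 'I_N, i.+1 = K0 -> expR (- Cd * K0%:R) <= ev i)) ->
  let m_stop (N : nat) : nat :=
    Num.truncn ((N%:R : R) `^ (4^-1 * (Cu + Cd + 2^-1) / (Cd + 1))) in
  exists delta : R, 0 < delta /\
  exists h : nat -> R,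
    (fun N => h N / (N%:R : R) `^ (4^-1 - delta)) @ \oo --> (0 : R) /\
    (fun N => P ([set w | h N < rkhs_norm vs (sampleX X N w)
                     (boost_coef vs lam (sampleX X N w) (sampleY X eps mu N w) (m_stop N))]
                 `&` [set w | B N (sampleX X N w)])) @ \oo --> 0%E.
Proof.
move=> vs0 lam0 mmu hmu mX meps hjoint _ _ _ horl _ Cu0 CuCd mB _ _ m_stop.
set a := 4^-1 * (Cu + Cd + 2^-1) / (Cd + 1).
have a0 : 0 <= a by rewrite /a; apply: divr_ge0; lra.
have a1 : a < 2^-1 by rewrite /a ltr_pdivrMr; lra.
exists ((4^-1 - a / 2) / 2); split; first lra.
have mu0 : 0 <= mu_max := le_trans (normr_ge0 _) (hmu [tuple of nseq d 0]).
have s0 := smax_gt0 horl.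
set r := s_max + 1.
have r0 : 0 < r by rewrite /r; lra.
exists (fun N => Num.sqrt ((m_stop N)%:R / lam) * (mu_max + r * Num.sqrt (2 * ln (N%:R : R)))).
split; first exact: (h_lim lam0 mu0 r0 a0 a1).
apply: (squeeze_cvge (f := fun=> 0%E) (h := fun N : nat => (2 * ((N%:R : R) `^ 1)^-1)%:E)).
- exists 1%N => // N /= N0.
  apply/andP; split; first exact: measure_ge0.
  set n := (N%:R : R).
  have n1 : 1 <= n by rewrite /n ler1n.
  have npos : 0 < n by lra.
  set t := r * Num.sqrt (2 * ln n).
  have t0 : 0 <= t by apply: mulr_ge0; [exact: ltW | exact: sqrtr_ge0].
  set hN := Num.sqrt ((m_stop N)%:R / lam) * (mu_max + t).
  set nrm := (fun w => rkhs_norm vs (sampleX X N w)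
      (boost_coef vs lam (sampleX X N w) (sampleY X eps mu N w) (m_stop N))).
  have mN : measurable_fun setT nrm := mf_norm vs0 lam0 mmu mX meps (m_stop N) N0.
  have msX : measurable_fun setT (sampleX X N).
    apply/measurable_fun_tnthP => i.
    rewrite (_ : _ \o _ = X i); first exact: mX.
    by apply: funext => w; rewrite /= /sampleX tnth_mktuple.
  have m1 : measurable [set w | hN < nrm w].
    have := mN measurableT _ (measurable_itv `]hN, +oo[).
    rewrite setTI; congr measurable; apply/seteqP; split => w /=; by rewrite in_itv /= andbT.
  have m2 : measurable [set w | B N (sampleX X N w)].
    by have := msX measurableT _ (mB N); rewrite setTI.
  have mS := measurableI _ _ m1 m2.
  have sS : [set w | hN < nrm w] `&` [set w | B N (sampleX X N w)] `<=`
      \big[setU/set0]_(i < N) (eps i @^-1` tailset t).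
    move=> w [/= Hh _]; apply: contrapT => Hn.
    have Heps : forall i : 'I_N, `|eps i w| <= t.
      move=> i; rewrite leNgt; apply/negP => Hi; apply: Hn.
      exact: (bigsetU_sup (F := fun i => eps i @^-1` tailset t) (ltn_ord i)).
    have hy : forall i, `|sampleY X eps mu N w i 0| <= mu_max + t.
      move=> i; rewrite mxE; apply: (le_trans (ler_normD _ _)).
      by apply: lerD; [exact: hmu | exact: Heps].
    have := norm_bound vs0 lam0 (sampleX X N w) (m_stop N) N0 (addr_ge0 mu0 t0) hy.
    by rewrite leNgt Hh.
  apply: le_trans (P_union horl meps hjoint t0 mS sS) _.
  rewrite lee_fin powRr1 ?ler0n //.
  have e : t ^+ 2 / (s_max + 1) ^+ 2 = ln n + ln n.
    rewrite /t -/r exprMn sqr_sqrtr; last by apply: mulr_ge0 => //; exact: ln_ge0.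
    by field; rewrite gt_eqF.
  rewrite e expRN expRD lnK ?posrE //.
  have nn0 : n != 0 by rewrite gt_eqF.
  by rewrite le_eqVlt; apply/orP; left; apply/eqP; field.
- exact: cvg_cst.
- apply: cvg_EFin; first by apply: nearW.
  have H : (fun N : nat => 2 * ((N%:R : R) `^ 1)^-1) @ \oo --> (2 * 0 : R).
    by apply: cvgM; [exact: cvg_cst | exact: powRV_cvg0 (@ltr01 R)].
  by rewrite mulr0 in H.
Qed.
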